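(* Let $(G,\circ)$ be a commutative group, $K$ a field, $t\in G$, $f:G\times G\to K$, and let $A=A_G(f,t)$. For $m\in\mathbb N$, one has $A^{[m]}=0$ if and only if $$\prod_{k=0}^{m-1}\ \prod_{s=0}^{2^{m-k-1}-1} f\Big(t^{2^k-1}\circ\prod_{q=1}^{2^k} a_{2^{k+1}s+q},\ \ t^{2^k-1}\circ\prod_{l=1}^{2^k} a_{2^{k+1}s+2^k+l}\Big)=0$$ for all $a_1,\dots,a_{2^m}\in G$ (products inside $f$ taken with respect to $\circ$). In particular, $A$ is solvable if and only if such an $m$ exists, and its index of solvability is the least such $m$.
   Context: The algebra $A_G(f,t)$ is the $K$-vector space with basis $\{e_a : a\in G\}$ and bilinear multiplication $e_a e_b = f(a,b)\, e_{a\circ b\circ t}$. The derived sequence is $A^{[0]}=A$, $A^{[k+1]}=A^{[k]}A^{[k]}$ (span of products); $A$ is solvable if $A^{[m]}=0$ for some $m$, and the least such $m$ is the index of solvability. *)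

(* Defs.v *)
From HB Require Import structures.
From mathcomp Require Import all_boot all_order all_algebra.
Set Implicit Arguments. Unset Strict Implicit. Unset Printing Implicit Defensive.
Import GRing.Theory.
Local Open Scope ring_scope.

(* The commutative group (G, o) is written additively as a zmodType:
   a o b = a + b, t^n = t *+ n.  Elements of A_G(f,t) are represented by
   finite formal combinations  sum c_i e_{g_i}  (a seq of pairs (c_i, g_i)),
   whose coefficient function G -> K is [coef v]. *)
Section AlgebraAG.
Variables (G : zmodType) (K : fieldType) (f : G -> G -> K) (t : G).

Definition coef (v : seq (K * G)) (g : G) : K :=
  \sum_(p <- v | p.2 == g) p.1.

(* bilinear extension of  e_a e_b = f(a,b) e_{a o b o t} *)
Definition agmul (v w : seq (K * G)) : seq (K * G) :=
  [seq (p.1 * q.1 * f p.2 q.2, p.2 + q.2 + t) | p <- v, q <- w].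

Definition agscale (c : K) (v : seq (K * G)) : seq (K * G) :=
  [seq (c * p.1, p.2) | p <- v].

(* [derived k u] : u (a coefficient function) is an element of A^{[k]}.
   A^{[0]} = A (all finitely supported functions),
   A^{[k+1]} = K-span of the products x y with x, y in A^{[k]}. *)
Fixpoint derived (k : nat) (u : G -> K) : Prop :=
  match k with
  | 0 => exists v : seq (K * G), u =1 coef v
  | k'.+1 =>
      exists s : seq (K * seq (K * G) * seq (K * G)),
        (forall e, e \in s -> derived k' (coef e.1.2) /\ derived k' (coef e.2))
        /\ u =1 coef (flatten [seq agscale e.1.1 (agmul e.1.2 e.2) | e <- s])
  end.

Definition derived_zero (m : nat) : Prop :=
  forall u, derived m u -> u =1 (fun _ => 0).

Definition ag_solvable : Prop := exists m, derived_zero m.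

Definition solv_index (m : nat) : Prop :=
  derived_zero m /\ forall m', (m' < m)%N -> ~ derived_zero m'.

(* The product condition; a_j (j = 1..2^m) is [a (j-1)]. *)
Definition prod_cond (m : nat) : Prop :=
  forall a : nat -> G,
    \prod_(k < m) \prod_(s < 2 ^ (m - k - 1))
      f (t *+ (2 ^ k - 1) + \sum_(q < 2 ^ k) a (2 ^ k.+1 * s + q)%N)
        (t *+ (2 ^ k - 1) + \sum_(l < 2 ^ k) a (2 ^ k.+1 * s + 2 ^ k + l)%N) = 0.
End AlgebraAG.

(* Main.v *)
Require Import Defs.
From HB Require Import structures.
From mathcomp Require Import all_boot all_order all_algebra.
From mathcomp Require Import zify.
Set Implicit Arguments. Unset Strict Implicit.
Import GRing.Theory.
Local Open Scope ring_scope.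

Section Aux.
Variables (G : zmodType) (K : fieldType) (t : G) (f : G -> G -> K).

Definition gk (k : nat) (a : nat -> G) : G := t *+ (2 ^ k - 1) + \sum_(q < 2 ^ k) a q.
Definition sh (k : nat) (a : nat -> G) : nat -> G := fun i => a (2 ^ k + i)%N.

Fixpoint Pr (k : nat) (a : nat -> G) {struct k} : K :=
  match k with
  | 0 => 1
  | k'.+1 => Pr k' a * Pr k' (sh k' a) * f (gk k' a) (gk k' (sh k' a))
  end.

Lemma gk_ext k a b : (forall i, (i < 2 ^ k)%N -> a i = b i) -> gk k a = gk k b.
Proof. by move=> H; rewrite /gk; congr (_ + _); apply: eq_bigr => i _; apply: H. Qed.

Lemma Pr_ext k : forall a b, (forall i, (i < 2 ^ k)%N -> a i = b i) -> Pr k a = Pr k b.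
Proof.
elim: k => [//|k IH] a b H /=.
have H1 : forall i, (i < 2 ^ k)%N -> a i = b i.
  move=> i Hi; apply: H; rewrite expnS; lia.
have H2 : forall i, (i < 2 ^ k)%N -> sh k a i = sh k b i.
  move=> i Hi; rewrite /sh; apply: H; rewrite expnS; lia.
by rewrite (IH _ _ H1) (IH _ _ H2) (gk_ext H1) (gk_ext H2).
Qed.

Lemma gk_succ k a : gk k.+1 a = gk k a + gk k (sh k a) + t.
Proof.
rewrite /gk.
have E : (2 ^ k.+1 = 2 ^ k + 2 ^ k)%N by rewrite expnS mul2n addnn.
rewrite E big_split_ord /=.
have e : (2 ^ k + 2 ^ k - 1 = (2 ^ k - 1) + (2 ^ k - 1) + 1)%N.
  have := expn_gt0 2 k; lia.
rewrite e !mulrnDr mulr1n.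
set X := t *+ _. set A := \sum_(i < _) _. set B := \sum_(i < _) _.
rewrite -!addrA; congr (_ + _); rewrite [RHS]addrCA; congr (_ + _); by rewrite [B + t]addrC addrCA.
Qed.


Definition FF (k s : nat) (a : nat -> G) : K :=
  f (t *+ (2 ^ k - 1) + \sum_(q < 2 ^ k) a (2 ^ k.+1 * s + q)%N)
    (t *+ (2 ^ k - 1) + \sum_(l < 2 ^ k) a (2 ^ k.+1 * s + 2 ^ k + l)%N).

Lemma FF_split m (k : 'I_m) a :
  \prod_(s < 2 ^ (m.+1 - k - 1)) FF k s a =
  \prod_(s < 2 ^ (m - k - 1)) FF k s a * \prod_(s < 2 ^ (m - k - 1)) FF k s (sh m a).
Proof.
have Hk := ltn_ord k.
have E : (2 ^ (m.+1 - k - 1) = 2 ^ (m - k - 1) + 2 ^ (m - k - 1))%N.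
  by rewrite (_ : (m.+1 - k - 1 = (m - k - 1).+1)%N) ?expnS ?mul2n ?addnn //; lia.
rewrite E big_split_ord /=; congr (_ * _); apply: eq_bigr => s _.
have P : (2 ^ k.+1 * 2 ^ (m - k - 1) = 2 ^ m)%N.
  by rewrite -expnD (_ : (k.+1 + (m - k - 1) = m)%N) //; lia.
rewrite /FF /sh; congr (f (_ + _) (_ + _)); apply: eq_bigr => q _; rewrite mulnDr P; congr (a _); lia.
Qed.

Lemma Pbig_Pr m : forall a, \prod_(k < m) \prod_(s < 2 ^ (m - k - 1)) FF k s a = Pr m a.
Proof.
elim: m => [|m IH] a; first by rewrite big_ord0.
rewrite big_ord_recr /= (eq_bigr _ (fun k _ => FF_split k a)) big_split /= !IH.
rewrite (_ : (m.+1 - m - 1 = 0)%N); last by lia.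
rewrite expn0 big_ord1 /FF /=; congr (_ * f _ _).
- by rewrite muln0 /gk; congr (_ + _); apply: eq_bigr => i _; rewrite add0n.
- by rewrite muln0 /gk; congr (_ + _); apply: eq_bigr => i _; rewrite add0n.
Qed.


Lemma dummy : True. Proof. by []. Qed.
Lemma sum_neq0 (I : eqType) (r : seq I) (F : I -> K) :
  \sum_(i <- r) F i != 0 -> exists2 i, i \in r & F i != 0.
Proof.
move=> H; case: (boolP (has (fun i => F i != 0) r)) => [/hasP [i ? ?]|/hasPn Hn].
  by exists i.
by move: H; rewrite big1_seq ?eqxx // => i /andP [_ /Hn]; rewrite negbK => /eqP.
Qed.

Lemma Lgen (X : seq G) (v : seq (K * G)) (H : G -> K) :
  uniq X -> {subset map snd v <= X} ->
  \sum_(p <- v) p.1 * H p.2 = \sum_(x <- X) coef v x * H x.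
Proof.
move=> uX; elim: v => [|p v IH] sub.
  by rewrite big_nil; symmetry; apply: big1 => x _; rewrite /coef big_nil mul0r.
rewrite big_cons IH; last by move=> x hx; apply: sub; rewrite inE hx orbT.
have cc : forall x, coef (p :: v) x = (if p.2 == x then p.1 else 0) + coef v x.
  by move=> x; rewrite /coef big_cons; case: ifP => _; rewrite ?add0r.
under [RHS]eq_bigr => x _ do rewrite cc mulrDl.
rewrite big_split /=; congr (_ + _).
have pX : p.2 \in X by apply: sub; rewrite inE eqxx.
rewrite (bigD1_seq p.2) //= eqxx big1 ?addr0 // => x.
by rewrite eq_sym => /negbTE ->; rewrite mul0r.
Qed.

Lemma L1 (v : seq (K * G)) (H : G -> K) :
  \sum_(p <- v) p.1 * H p.2 != 0 -> exists x, coef v x * H x != 0.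
Proof.
rewrite (@Lgen (undup (map snd v))) ?undup_uniq //; last by move=> x; rewrite mem_undup.
by case/sum_neq0 => x _ Hx; exists x.
Qed.

Lemma coef_agmul v w g : coef (agmul f t v w) g != 0 ->
  exists x y, [/\ coef v x != 0, coef w y != 0, f x y != 0 & g = x + y + t].
Proof.
rewrite /coef /agmul big_mkcond big_allpairs_dep /=.
set HH := fun x y => if x + y + t == g then f x y else 0.
rewrite (eq_bigr (fun p => p.1 * \sum_(q <- w) q.1 * HH p.2 q.2)); last first.
  move=> p _; rewrite big_distrr /=; apply: eq_bigr => q _.
  by rewrite /HH; case: ifP; rewrite ?mulr0 // mulrA.
move/(@L1 v (fun x => \sum_(q <- w) q.1 * HH x q.2)) => [x].
rewrite mulf_eq0 negb_or => /andP [cx].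
move/(@L1 w (fun y => HH x y)) => [y]. rewrite mulf_eq0 negb_or => /andP [cy]; rewrite /HH.
case: (x + y + t =P g) => [<- fxy|_]; first by exists x, y. by rewrite eqxx.
Qed.


Lemma derived_inv k : forall u, derived f t k u ->
  forall g, u g != 0 -> exists a, g = gk k a /\ Pr k a != 0.
Proof.
elim: k => [|k IH] u /=.
  move=> _ g _; exists (fun _ => g); split; last by rewrite oner_neq0.
  by rewrite /gk expn0 subnn mulr0n add0r big_ord1.
move=> [s [Hs Hu]] g; rewrite Hu /coef big_flatten big_map /=.
case/sum_neq0 => e es.
rewrite big_map /= -big_distrr /= mulf_eq0 negb_or => /andP [_].
case/coef_agmul => x [y [cx cy fxy ->]].
have [H1 H2] := Hs e es.
have [a1 [ex p1]] := IH _ H1 x cx.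
have [a2 [ey p2]] := IH _ H2 y cy.
pose a := fun i => if (i < 2 ^ k)%N then a1 i else a2 (i - 2 ^ k)%N.
have A1 : forall i, (i < 2 ^ k)%N -> a i = a1 i by move=> i Hi; rewrite /a Hi.
have A2 : forall i, (i < 2 ^ k)%N -> sh k a i = a2 i.
  by move=> i _; rewrite /sh /a ifN ?addKn // -leqNgt leq_addr.
exists a; rewrite gk_succ (gk_ext A1) (gk_ext A2) -ex -ey; split => //=.
by rewrite (Pr_ext A1) (Pr_ext A2) !mulf_neq0.
Qed.

Fixpoint V (k : nat) (a : nat -> G) {struct k} : seq (K * G) :=
  match k with
  | 0 => [:: (1, a 0%N)]
  | k'.+1 => flatten [seq agscale e.1.1 (agmul f t e.1.2 e.2) |
                       e <- [:: (1, V k' a, V k' (sh k' a))]]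
  end.

Lemma V_derived k : forall a, derived f t k (coef (V k a)).
Proof.
elim: k => [|k IH] a /=; first by exists [:: (1, a 0%N)].
exists [:: (1, V k a, V k (sh k a))]; split => // e; rewrite inE => /eqP -> /=.
by split; apply: IH.
Qed.

Lemma V_val k : forall a, V k a = [:: (Pr k a, gk k a)].
Proof.
elim: k => [|k IH] a /=.
  by rewrite /gk expn0 subnn mulr0n add0r big_ord1.
by rewrite !IH /= mul1r gk_succ.
Qed.

Lemma prod_cond_Pr m : prod_cond f t m <-> forall a, Pr m a = 0.
Proof.
split => H a; first by rewrite -Pbig_Pr; apply: H.
by have := H a; rewrite -Pbig_Pr.
Qed.

Lemma main_eq m : derived_zero f t m <-> prod_cond f t m.
Proof.
rewrite prod_cond_Pr; split => H.
  move=> a; have := H _ (V_derived m a) (gk m a).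
  by rewrite V_val /coef big_cons eqxx big_nil addr0.
move=> u du g; apply/eqP; apply/negP => /negP ug.
have [a [_ pa]] := derived_inv du ug.
by move: pa; rewrite H eqxx.
Qed.

End Aux.

Theorem proposition3p2 (G : zmodType) (K : fieldType) (t : G) (f : G -> G -> K) :
  (forall m : nat, derived_zero f t m <-> prod_cond f t m)
  /\ (ag_solvable f t <-> exists m : nat, prod_cond f t m)
  /\ (forall m : nat, solv_index f t m <->
        (prod_cond f t m /\ forall m', (m' < m)%N -> ~ prod_cond f t m')).
Proof.
have E := @main_eq G K t f.
split => //; split.
  by split => [[m /E Hm]|[m /E Hm]]; exists m.
move=> m; rewrite /solv_index E; split => [[H1 H2]|[H1 H2]]; split => // m' lt;
  [move=> /E|rewrite E]; exact: H2.
Qed.
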